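(* Let $R$ be a tolerance relation on $\{1,\ldots,n\}$ and assume that in each connected component of the graph of $R$ there is a dominant vertex. Then for every $a\in A(R)$ one has $a\succeq 0$ if and only if there exist finitely many $b_1,\ldots,b_k\in A(R)$ with $a=\sum_{i=1}^k b_i\star b_i^*$.
   Context: A tolerance relation on a set $X$ is a reflexive and symmetric relation $R\subset X\times X$; its graph is the undirected graph with vertex set $X$ and an edge between $i\neq j$ whenever $(i,j)\in R$. A dominant vertex of a graph is a vertex adjacent to all other vertices (here: of its connected component). Let $T:M_n(\mathbb{C})\to M_n(\mathbb{C})$, $T(b)=\sum_{(i,j)\in R}E_{ii}bE_{jj}$ (i.e. $T$ sets to zero the entries in positions $(i,j)\notin R$), where $E_{ij}$ are matrix units. $A(R)=T(M_n(\mathbb{C}))$, with product $a\star b:=T(ab)$ and involution the conjugate transpose. For $a\in A(R)$, write $a\succeq 0$ if there exists a positive semidefinite $b\in M_n(\mathbb{C})$ with $a=T(b)$. *)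

(* Defs.v *)
From HB Require Import structures.
From mathcomp Require Import all_boot all_order all_algebra.
From mathcomp Require Import reals complex.
Set Implicit Arguments. Unset Strict Implicit. Unset Printing Implicit Defensive.
Import Order.TTheory GRing.Theory Num.Theory.
Local Open Scope ring_scope.

Definition tolerance (n : nat) (R : rel 'I_n) : Prop := reflexive R /\ symmetric R.

Definition tol_graph (n : nat) (R : rel 'I_n) : rel 'I_n := fun i j => (i != j) && R i j.

Definition dominant_in_component (n : nat) (R : rel 'I_n) (v : 'I_n) : Prop :=
  forall w, connect (tol_graph R) v w -> w != v -> tol_graph R v w.

Definition each_component_has_dominant (n : nat) (R : rel 'I_n) : Prop :=
  forall i, exists v, connect (tol_graph R) i v /\ dominant_in_component R v.

Definition adjmx (C : numClosedFieldType) (m p : nat) (b : 'M[C]_(m, p)) : 'M[C]_(p, m) :=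
  \matrix_(i, j) (b j i)^*.

Definition Tmask (C : numClosedFieldType) (n : nat) (R : rel 'I_n) (b : 'M[C]_n) : 'M[C]_n :=
  \matrix_(i, j) (if R i j then b i j else 0).

Definition inAR (C : numClosedFieldType) (n : nat) (R : rel 'I_n) (a : 'M[C]_n) : Prop :=
  exists b, a = Tmask R b.

Definition starmul (C : numClosedFieldType) (n : nat) (R : rel 'I_n) (a b : 'M[C]_n) : 'M[C]_n :=
  Tmask R (a *m b).

Definition psdmx (C : numClosedFieldType) (n : nat) (b : 'M[C]_n) : Prop :=
  adjmx b = b /\ forall x : 'cV[C]_n, 0 <= (adjmx x *m b *m x) 0 0.

Definition ARpos (C : numClosedFieldType) (n : nat) (R : rel 'I_n) (a : 'M[C]_n) : Prop :=
  exists b, psdmx b /\ a = Tmask R b.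

(* Main.v *)
Require Import Defs.
From mathcomp Require Import all_boot all_order all_algebra.
From mathcomp Require Import reals complex.
From mathcomp Require Import sesquilinear spectral ring.
Import GRing.Theory Num.Theory.
Local Open Scope ring_scope.
Local Open Scope sesquilinear_scope.

Section S.
Variable C : numClosedFieldType.

Lemma adjmxE m p (b : 'M[C]_(m, p)) : adjmx b = b ^t*.
Proof. by apply/matrixP => i j; rewrite !mxE. Qed.

Lemma adjmx_mul m p q (A : 'M[C]_(m, p)) (B : 'M[C]_(p, q)) :
  adjmx (A *m B) = adjmx B *m adjmx A.
Proof. by rewrite !adjmxE trmx_mul map_mxM. Qed.

Lemma adjmxK m p (A : 'M[C]_(m, p)) : adjmx (adjmx A) = A.
Proof. by rewrite !adjmxE trmxCK. Qed.

Lemma psd_factor n (A : 'M[C]_n) : psdmx A ->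
  exists cs : 'I_n -> 'cV[C]_n, A = \sum_k cs k *m adjmx (cs k).
Proof.
move=> [Ah Apos].
have An : A \is normalmx by apply/normalmxP; rewrite -adjmxE Ah.
have /orthomx_spectralP Ae := An.
set P := spectralmx A in Ae; set d := spectral_diag A in Ae.
have Pu : P \is unitarymx by apply: spectral_unitarymx.
have PQ : P *m P^t* = 1%:M by apply/eqP.
rewrite invmx_unitary // in Ae.
set Q := P^t* in Ae PQ.
have dge0 k : 0 <= d 0 k.
  have := Apos (Q *m delta_mx k 0).
  rewrite adjmx_mul Ae [adjmx Q]adjmxE /Q trmxCK -/Q.
  rewrite !mulmxA -(mulmxA _ P Q) PQ mulmx1 -(mulmxA _ P Q) PQ mulmx1.
  rewrite -mulmxA mul_diag_mx. 
  rewrite mxE (bigD1 k) //= big1 ?addr0.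
    by rewrite !mxE !eqxx /= conjC1 mulr1 mul1r.
  by move=> j /negbTE jk; rewrite !mxE jk /= conjC0 mul0r.
pose cs k := sqrtC (d 0 k) *: col k Q.
exists cs; apply/matrixP => i j.
rewrite Ae mxE summxE; apply: eq_bigr => k _.
rewrite mul_mx_diag !mxE big_ord1 !mxE.
rewrite rmorphM /= conjCK [(sqrtC _)^*]geC0_conj ?sqrtC_ge0 //.
rewrite -{1}(sqrtCK (d 0 k)) expr2; ring.
Qed.

Lemma Tmask_sum n (R : rel 'I_n) (I : finType) (F : I -> 'M[C]_n) :
  Tmask R (\sum_l F l) = \sum_l Tmask R (F l).
Proof.
apply/matrixP => i j; rewrite !mxE !summxE.
case E: (R i j); first by apply: eq_bigr => l _; rewrite mxE E.
by rewrite big1 // => l _; rewrite mxE E.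
Qed.

Lemma adjmx_sum n k (F : 'I_k -> 'M[C]_n) :
  adjmx (\sum_l F l) = \sum_l adjmx (F l).
Proof.
apply/matrixP => i j; rewrite !mxE !summxE rmorph_sum.
by apply: eq_bigr => l _; rewrite !mxE.
Qed.

Lemma quad_ge0 n (y : 'cV[C]_n) : 0 <= (adjmx y *m y) 0 0.
Proof.
rewrite mxE; apply: sumr_ge0 => i _; rewrite mxE mulrC; exact: mul_conjC_ge0.
Qed.

Lemma psd_sum n k (b : 'I_k -> 'M[C]_n) :
  psdmx (\sum_l b l *m adjmx (b l)).
Proof.
split.
  rewrite adjmx_sum; apply: eq_bigr => l _.
  by rewrite adjmx_mul adjmxK.
move=> x; rewrite mulmx_sumr mulmx_suml summxE; apply: sumr_ge0 => l _.
rewrite mulmxA -(mulmxA _ _ x).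
have -> : adjmx x *m b l = adjmx (adjmx (b l) *m x) by rewrite adjmx_mul adjmxK.
exact: quad_ge0.
Qed.
End S.
Local Close Scope sesquilinear_scope.

Theorem proposition4p4 (Rr : realType) (n : nat) (R : rel 'I_n) :
  tolerance R -> each_component_has_dominant R ->
  forall a : 'M[Rr[i]]_n, inAR R a ->
    (ARpos R a <->
     exists (k : nat) (b : 'I_k -> 'M[Rr[i]]_n),
       (forall l, inAR R (b l)) /\
       a = \sum_(l < k) starmul R (b l) (adjmx (b l))).
Proof.
move=> [Rrefl Rsym] Hdom a _; split; last first.
  case=> k [b [_ ->]]; exists (\sum_l b l *m adjmx (b l)); split.
    exact: (@psd_sum _).
  by rewrite /starmul Tmask_sum.
case=> p [pp ->]; have [cs pe] := @psd_factor _ _ _ pp.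
have esym : symmetric (tol_graph R).
  by move=> x y; rewrite /tol_graph eq_sym Rsym.
have csym := sym_connect_sym esym.
have [g Hg] := fin_all_exists Hdom.
pose f i := g (fingraph.root (tol_graph R) i).
have Rf i : R i (f i).
  have [c dm] := Hg (fingraph.root (tol_graph R) i).
  have ci : connect (tol_graph R) i (f i) := connect_trans (connect_root _ i) c.
  case: (eqVneq i (f i)) => [<-|ne]; first exact: Rrefl.
  have cfi : connect (tol_graph R) (f i) i by rewrite csym.
  have /andP[_] := dm i cfi ne.
  by rewrite Rsym.
have Rff i j : R i j -> f i = f j.
  move=> Rij.
  have H : connect (tol_graph R) i j.
    case: (eqVneq i j) => [->|ne]; first exact: connect0.
    by apply: connect1; rewrite /tol_graph ne Rij.
  by rewrite /f (fingraph.rootP csym H).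
pose B (kv : 'I_n * 'I_n) : 'M[Rr[i]]_n :=
  \matrix_(i, j) if (j == kv.2) && (f i == kv.2) then cs kv.1 i 0 else 0.
have BR kv : inAR R (B kv).
  exists (B kv); apply/matrixP => i j; rewrite !mxE.
  case E: (R i j) => //; case: ifP => // /andP[/eqP jv /eqP Ef].
  by rewrite jv -Ef Rf in E.
have BB kv i j : (B kv *m adjmx (B kv)) i j =
    if (f i == kv.2) && (f j == kv.2) then cs kv.1 i 0 * (cs kv.1 j 0)^* else 0.
  rewrite mxE (bigD1 kv.2) //= big1 ?addr0.
    rewrite !mxE eqxx /=.
    by case: eqP; case: eqP => //= _ _; rewrite ?mul0r ?conjC0 ?mulr0.
  by move=> m /negbTE mne; rewrite !mxE mne /= mul0r.
exists #|{: 'I_n * 'I_n}|, (fun l => B (enum_val l)); split => [l|]; first exact: BR.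
rewrite -(big_enum_val (fun kv => starmul R (B kv) (adjmx (B kv)))).
rewrite /starmul -Tmask_sum; apply/matrixP => i j; rewrite !mxE.
case E: (R i j) => //.
rewrite pe !summxE.
transitivity (\sum_k \sum_u (B (k,u) *m adjmx (B (k,u))) i j); last first.
  rewrite pair_bigA; apply: eq_bigr => x _. by case: x.
apply: eq_bigr => k _.
under eq_bigr do rewrite BB /=.
rewrite (bigD1 (f i)) //= big1 ?addr0.
  by rewrite (Rff _ _ E) eqxx mxE big_ord1 !mxE.
by move=> u /negbTE ne; rewrite eq_sym ne.
Qed.
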